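(* Let $1\le n\le\omega$. There is a Borel reduction $\psi\colon X_n\to X_n$ of $F_n$ to $F_n$ such that for every $x$ in the image of $\psi$, $x(i)$ is injective for all $i<n$ and $x(i)$ is separated for all $0<i<n$.
   Context: Let $\mathbb N=\{0,1,2,\dots\}$ and identify $2^{\mathbb N}$ with $\mathcal P(\mathbb N)$. For $1\le m\le\omega$ and $x\in((2^{\mathbb N})^{\mathbb N})^m$ define recursively: $A^x_1=\{x(0)(k):k\in\mathbb N\}\subseteq 2^{\mathbb N}$; for $1\le j<m$ and $l\in\mathbb N$, $a^{x,l}_1=\{x(0)(k):x(1)(l)(k)=1\}$ and $a^{x,l}_{j}=\{a^{x,k}_{j-1}:x(j)(l)(k)=1\}$ for $j\ge 2$; and $A^x_{j+1}=\{a^{x,k}_j:k\in\mathbb N\}$ for $1\le j<m$. Let $X_1=(2^{\mathbb N})^{\mathbb N}$, and for $2\le n\le\omega$ let $X_n$ be the set of $x\in((2^{\mathbb N})^{\mathbb N})^n$ such that for every $1\le i<n$: (1) for every $m$ there is $k$ with $x(i)(k)(m)=1$; (2) for every $k$ there is $m$ with $x(i)(k)(m)=1$; (3) for all $k,l_1,l_2$, if $x(i-1)(l_1)=x(i-1)(l_2)$ then $x(i)(k)(l_1)=x(i)(k)(l_2)$. For $1\le n<\omega$, $F_n$ on $X_n$ is $x\mathrel{F_n}y\iff A^x_n=A^y_n$; $F_\omega$ on $X_\omega$ is $x\mathrel{F_\omega}y\iff A^x_j=A^y_j$ for all $1\le j<\omega$. A sequence $a\in(2^{\mathbb N})^{\mathbb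 N}$ is injective if $a(i)\ne a(j)$ for $i\ne j$, and separated if for all distinct $n,k\in\mathbb N$ there is $i$ with $a(i)(n)\ne a(i)(k)$. *)

(* Defs.v *)
From Stdlib Require Import Arith.

(* A point of ((2^N)^N)^omega: x i k m = x(i)(k)(m).  Points of ((2^N)^N)^n
   for finite n are encoded as points whose coordinates i >= n are identically
   false (a homeomorphic copy, closed in the big space). *)
Definition T := nat -> nat -> nat -> bool.

(* n with 1 <= n <= omega : Some m = finite m, None = omega *)
Definition lt_idx (n : option nat) (i : nat) : Prop :=
  match n with Some m => i < m | None => True end.

Definition padded (n : option nat) (x : T) : Prop :=
  match n with
  | Some m => forall i k l, m <= i -> x i k l = false
  | None => True
  end.

(* Borel sets of T = 2^(N x N x N) with the product topology: the
   sigma-algebra generated by the (clopen) subbasic cylinders. *)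
Inductive borel : (T -> Prop) -> Prop :=
| borel_cyl (i k m : nat) : borel (fun x => x i k m = true)
| borel_compl (A : T -> Prop) : borel A -> borel (fun x => ~ A x)
| borel_union (A : nat -> T -> Prop) :
    (forall j, borel (A j)) -> borel (fun x => exists j, A j x).

Definition Xn (n : option nat) (x : T) : Prop :=
  padded n x /\
  forall i, 1 <= i -> lt_idx n i ->
    (forall m, exists k, x i k m = true) /\
    (forall k, exists m, x i k m = true) /\
    (forall k l1 l2, x (i - 1) l1 = x (i - 1) l2 -> x i k l1 = x i k l2).

Fixpoint lvl (j : nat) : Type :=
  match j with
  | 0 => nat -> bool
  | S j' => lvl j' -> Prop
  end.

Fixpoint a (j : nat) (x : T) (l : nat) : lvl j :=
  match j as j0 return lvl j0 with
  | 0 => x 0 l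
  | S j' => fun s => exists k, x (S j') l k = true /\ s = a j' x k
  end.

(* AA j x = A^x_{j+1} = { a^{x,k}_j : k in N } *)
Definition AA (j : nat) (x : T) : lvl (S j) := fun s => exists k, s = a j x k.

Definition Fn (n : option nat) (x y : T) : Prop :=
  match n with
  | Some m => AA (m - 1) x = AA (m - 1) y
  | None => forall j, AA j x = AA j y
  end.

Definition injective_seq (s : nat -> nat -> bool) : Prop :=
  forall i j, i <> j -> s i <> s j.

Definition separated (s : nat -> nat -> bool) : Prop :=
  forall n k, n <> k -> exists i, s i n <> s i k.

Definition borel_reduction (n : option nat) (psi : T -> T) : Prop :=
  (forall x, Xn n x -> Xn n (psi x)) /\
  (forall B, borel B -> borel (fun x => Xn n x /\ B (psi x))) /\
  (forall x y, Xn n x -> Xn n y -> (Fn n x y <-> Fn n (psi x) (psi y))).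

(* Main.v *)
Require Import Defs.
From Stdlib Require Import Arith Lia Cantor.
From Stdlib Require Import Classical ClassicalDescription FunctionalExtensionality PropExtensionality.

Lemma borel_ext (A B : T -> Prop) : borel A -> (forall x, A x <-> B x) -> borel B.
Proof.
  intros HA H. assert (A = B) as <-; [|exact HA].
  apply functional_extensionality; intro x; apply propositional_extensionality; auto.
Qed.

Lemma borel_not (A : T -> Prop) : borel A -> borel (fun x => ~ A x).
Proof. intro; apply borel_compl; auto. Qed.

Lemma borel_ex (A : nat -> T -> Prop) : (forall j, borel (A j)) -> borel (fun x => exists j, A j x).
Proof. intro; apply borel_union; auto. Qed.

Lemma borel_all (A : nat -> T -> Prop) : (forall j, borel (A j)) -> borel (fun x => forall j, A j x).
Proof.
  intro H. apply borel_ext with (fun x => ~ exists j, ~ A j x).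
  - apply borel_not, borel_ex; intro j; apply borel_not; auto.
  - intro x; split.
    + intros H1 j. apply NNPP; intro H2; apply H1; eauto.
    + intros H1 [j Hj]; auto.
Qed.

Lemma borel_or (A B : T -> Prop) : borel A -> borel B -> borel (fun x => A x \/ B x).
Proof.
  intros HA HB. apply borel_ext with (fun x => exists j, (if Nat.eqb j 0 then A else B) x).
  - apply borel_ex; intro j; destruct (Nat.eqb j 0); auto.
  - intro x; split.
    + intros [j Hj]; destruct (Nat.eqb j 0); auto.
    + intros [H|H]; [exists 0|exists 1]; auto.
Qed.

Lemma borel_and (A B : T -> Prop) : borel A -> borel B -> borel (fun x => A x /\ B x).
Proof.
  intros HA HB. apply borel_ext with (fun x => ~ (~ A x \/ ~ B x)).
  - apply borel_not, borel_or; apply borel_not; auto.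
  - intro x; split.
    + intro H; split; apply NNPP; intro; apply H; auto.
    + intros [] [|]; auto.
Qed.

Lemma borel_imp (A B : T -> Prop) : borel A -> borel B -> borel (fun x => A x -> B x).
Proof.
  intros HA HB. apply borel_ext with (fun x => ~ A x \/ B x).
  - apply borel_or; [apply borel_not|]; auto.
  - intro x; split.
    + intros [H|H] H'; [contradiction|auto].
    + intro H; destruct (classic (A x)); auto.
Qed.

Lemma borel_True : borel (fun _ => True).
Proof.
  apply borel_ext with (fun x => x 0 0 0 = true \/ ~ x 0 0 0 = true).
  - apply borel_or; [|apply borel_not]; apply borel_cyl.
  - intro x; split; auto. intros _; apply classic.
Qed.

Lemma borel_False : borel (fun _ => False).
Proof.
  apply borel_ext with (fun x => ~ True). apply borel_not, borel_True.
  intro; tauto.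
Qed.

Lemma borel_const (P : Prop) : borel (fun _ => P).
Proof.
  destruct (classic P) as [H|H].
  - apply borel_ext with (fun _ => True); [apply borel_True|]; tauto.
  - apply borel_ext with (fun _ => False); [apply borel_False|]; tauto.
Qed.

Lemma borel_bit (i k m : nat) (b : bool) : borel (fun x => x i k m = b).
Proof.
  destruct b. apply borel_cyl.
  apply borel_ext with (fun x => ~ x i k m = true). apply borel_not, borel_cyl.
  intro x; destruct (x i k m); intuition congruence.
Qed.

Lemma borel_biteq (i k m i' k' m' : nat) : borel (fun x => x i k m = x i' k' m').
Proof.
  apply borel_ext with (fun x => (x i k m = true /\ x i' k' m' = true) \/ (x i k m = false /\ x i' k' m' = false)).
  - apply borel_or; apply borel_and; apply borel_bit.
  - intro x; destruct (x i k m), (x i' k' m'); intuition congruence.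
Qed.

Lemma borel_rowfun_eq (i k i' k' : nat) : borel (fun x => x i k = x i' k').
Proof.
  apply borel_ext with (fun x => forall p, x i k p = x i' k' p).
  - apply borel_all; intro; apply borel_biteq.
  - intro x; split; intro H; [apply functional_extensionality; auto| rewrite H; auto].
Qed.

Definition dec (P : Prop) : bool := if excluded_middle_informative P then true else false.

Lemma dec_true (P : Prop) : dec P = true <-> P.
Proof. unfold dec; destruct (excluded_middle_informative P); intuition congruence. Qed.

Lemma dec_false (P : Prop) : dec P = false <-> ~ P.
Proof. unfold dec; destruct (excluded_middle_informative P); intuition congruence. Qed.

Fixpoint cnt (f : nat -> bool) (N : nat) : nat :=
  match N with 0 => 0 | S N' => cnt f N' + (if f N' then 1 else 0) end.

Lemma cnt_mono (f : nat -> bool) (a b : nat) : a <= b -> cnt f a <= cnt f b.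
Proof. induction 1; simpl; [lia|]. destruct (f m); lia. Qed.

Lemma cnt_ext (f g : nat -> bool) N : (forall c, f c = g c) -> cnt f N = cnt g N.
Proof. intro H; induction N; simpl; auto. rewrite IHN, H; auto. Qed.

Lemma cnt_inj (f : nat -> bool) c1 c2 : f c1 = true -> f c2 = true -> cnt f c1 = cnt f c2 -> c1 = c2.
Proof.
  intros H1 H2 H.
  assert (forall a b, a < b -> f a = true -> cnt f a < cnt f b).
  { intros a b Hab Ha. assert (cnt f (S a) <= cnt f b) by (apply cnt_mono; lia).
    simpl in H0; rewrite Ha in H0; lia. }
  destruct (lt_eq_lt_dec c1 c2) as [[h|h]|h]; auto.
  - specialize (H0 _ _ h H1); lia.
  - specialize (H0 _ _ h H2); lia.
Qed.

Lemma cnt_surj (f : nat -> bool) : (forall N, exists c, N <= c /\ f c = true) ->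
  forall t, exists c, f c = true /\ cnt f c = t.
Proof.
  intros Hinf t.
  assert (Hub : forall t, exists N, t < cnt f N).
  { induction t0.
    - destruct (Hinf 0) as [c [_ Hc]]. exists (S c); simpl; rewrite Hc; lia.
    - destruct IHt0 as [N HN]. destruct (Hinf N) as [c [Hc1 Hc2]].
      exists (S c). simpl; rewrite Hc2. pose proof (cnt_mono f N c Hc1); lia. }
  destruct (Hub t) as [N HN].
  clear Hub. induction N; simpl in HN; [lia|].
  destruct (le_lt_dec (cnt f N) t) as [h|h].
  - exists N. destruct (f N) eqn:E; [split; auto; lia|lia].
  - auto.
Qed.

Definition pr (k s : nat) : nat := Cantor.to_nat (k, s).
Definition unp (c : nat) : nat * nat := Cantor.of_nat c.

Lemma unp_pr k s : unp (pr k s) = (k, s).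
Proof. apply Cantor.cancel_of_to. Qed.

Lemma pr_unp c : pr (fst (unp c)) (snd (unp c)) = c.
Proof. unfold pr, unp. rewrite <- surjective_pairing. apply Cantor.cancel_to_of. Qed.

Lemma pr_ge k s : s <= pr k s.
Proof. unfold pr. pose proof (Cantor.to_nat_non_decreasing k s). lia. Qed.

Lemma pr_inj k s k' s' : pr k s = pr k' s' -> k = k' /\ s = s'.
Proof. intro H. assert (unp (pr k s) = unp (pr k' s')) by (rewrite H; auto).
  rewrite !unp_pr in H0. inversion H0; auto. Qed.

Definition E (j : nat) (x : T) (k1 k2 : nat) : bool := dec (a j x k1 = a j x k2).

Definition rank (j : nat) (x : T) (k s : nat) : nat :=
  cnt (fun c => E j x (fst (unp c)) k) (pr k s).

Lemma rank_ext j x k k' s : a j x k = a j x k' ->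
  rank j x k s = cnt (fun c => E j x (fst (unp c)) k') (pr k s).
Proof.
  intro H. unfold rank. apply cnt_ext. intro c. unfold E. rewrite H. auto.
Qed.

Lemma rank_inj j x k1 s1 k2 s2 : a j x k1 = a j x k2 -> rank j x k1 s1 = rank j x k2 s2 ->
  k1 = k2 /\ s1 = s2.
Proof.
  intros Ha Hr. rewrite (rank_ext j x k1 k2 s1 Ha) in Hr. unfold rank in Hr.
  apply cnt_inj in Hr.
  - apply pr_inj; auto.
  - rewrite unp_pr; simpl; unfold E; apply dec_true; auto.
  - rewrite unp_pr; simpl; unfold E; apply dec_true; auto.
Qed.

Lemma rank_surj j x k t : exists k' s', a j x k' = a j x k /\ rank j x k' s' = t.
Proof.
  destruct (cnt_surj (fun c => E j x (fst (unp c)) k)) with (t := t) as [c [Hc1 Hc2]].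
  - intro N. exists (pr k N). split; [apply pr_ge|]. rewrite unp_pr; simpl.
    unfold E; apply dec_true; auto.
  - exists (fst (unp c)), (snd (unp c)).
    unfold E in Hc1; apply (proj1 (dec_true _)) in Hc1. split; auto.
    rewrite (rank_ext _ _ _ _ _ Hc1). rewrite pr_unp. auto.
Qed.

Lemma borel_cnt (f : T -> nat -> bool) : (forall c, borel (fun x => f x c = true)) ->
  forall N p, borel (fun x => cnt (f x) N = p).
Proof.
  intros Hf N. induction N; intro p; simpl.
  - apply borel_const.
  - apply borel_ext with (fun x => (f x N = true /\ 1 <= p /\ cnt (f x) N = p - 1) \/
                                   (~ f x N = true /\ cnt (f x) N = p)).
    + apply borel_or; apply borel_and; auto.
      apply borel_and; auto. apply borel_const. apply borel_not; auto.
    + intro x. destruct (f x N); split; intuition (try lia; try congruence).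
Qed.

Lemma aS_eq j x k1 k2 :
  a (S j) x k1 = a (S j) x k2 <->
  (forall k, x (S j) k1 k = true -> exists k', x (S j) k2 k' = true /\ a j x k = a j x k') /\
  (forall k, x (S j) k2 k = true -> exists k', x (S j) k1 k' = true /\ a j x k = a j x k').
Proof.
  split.
  - intro H. split; intros k Hk.
    + assert (Hm : a (S j) x k1 (a j x k)) by (simpl; eauto).
      rewrite H in Hm. destruct Hm as [k' [H1 H2]]; eauto.
    + assert (Hm : a (S j) x k2 (a j x k)) by (simpl; eauto).
      rewrite <- H in Hm. destruct Hm as [k' [H1 H2]]; eauto.
  - intros [H1 H2]. apply functional_extensionality; intro s; apply propositional_extensionality.
    simpl; split.
    + intros [k [Hk ->]]. destruct (H1 k Hk) as [k' [? ?]]; eauto.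
    + intros [k [Hk ->]]. destruct (H2 k Hk) as [k' [? ?]]; eauto.
Qed.

Lemma borel_aeq j : forall k1 k2, borel (fun x => a j x k1 = a j x k2).
Proof.
  induction j; intros k1 k2.
  - simpl. apply borel_rowfun_eq.
  - apply borel_ext with (fun x =>
      (forall k, x (S j) k1 k = true -> exists k', x (S j) k2 k' = true /\ a j x k = a j x k') /\
      (forall k, x (S j) k2 k = true -> exists k', x (S j) k1 k' = true /\ a j x k = a j x k')).
    + apply borel_and; apply borel_all; intro k; apply borel_imp; try apply borel_cyl;
        apply borel_ex; intro k'; apply borel_and; auto; apply borel_cyl.
    + intro x; symmetry; apply aS_eq.
Qed.

Lemma borel_rank j k s p : borel (fun x => rank j x k s = p).
Proof.
  unfold rank. apply (borel_cnt (fun x c => E j x (fst (unp c)) k)).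
  intro c. apply borel_ext with (fun x => a j x (fst (unp c)) = a j x k).
  apply borel_aeq. intro x; unfold E; rewrite dec_true; tauto.
Qed.

Definition ltb (n : option nat) (i : nat) : bool :=
  match n with Some m => Nat.ltb i m | None => true end.

Lemma ltb_spec n i : ltb n i = true <-> lt_idx n i.
Proof. destruct n; simpl; [apply Nat.ltb_lt|tauto]. Qed.

Definition Gam0 (v : nat -> bool) (r : nat) (m : nat) : bool :=
  match m with 0 => false | S p => if Nat.even p then v (Nat.div2 p) else Nat.eqb (Nat.div2 p) r end.

Definition aux (q : nat) (m : nat) : bool :=
  match m with 0 => true | S p => Nat.eqb p q end.

Fixpoint tau (j r : nat) : nat :=
  match j with 0 => 2 * r + 1 | S j' => 2 * tau j' r + 1 end.

Definition psi (n : option nat) (x : T) (i l m : nat) : bool :=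
  if ltb n i then
    match i with
    | 0 => if Nat.even l
           then Gam0 (x 0 (fst (unp (Nat.div2 l))))
                     (rank 0 x (fst (unp (Nat.div2 l))) (snd (unp (Nat.div2 l)))) m
           else aux (Nat.div2 l) m
    | S j => if Nat.even l
             then (Nat.even m && dec (exists k'', x (S j) (fst (unp (Nat.div2 l))) k'' = true /\
                                       a j x k'' = a j x (fst (unp (Nat.div2 m)))))
                  || Nat.eqb m (tau j (rank (S j) x (fst (unp (Nat.div2 l))) (snd (unp (Nat.div2 l)))))
             else Nat.eqb m (Nat.div2 l)
    end
  else false.

Lemma borel_psi n i l m : borel (fun x => psi n x i l m = true).
Proof.
  unfold psi. destruct (ltb n i); [|apply borel_const].
  destruct i as [|j].
  - destruct (Nat.even l); [|apply borel_const].
    destruct m as [|p]; simpl; [apply borel_const|].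
    destruct (Nat.even p); [apply borel_cyl|].
    apply borel_ext with (fun x => rank 0 x (fst (unp (Nat.div2 l))) (snd (unp (Nat.div2 l))) = Nat.div2 p).
    apply borel_rank. intro x; rewrite Nat.eqb_eq; intuition.
  - destruct (Nat.even l); [|apply borel_const].
    apply borel_ext with (fun x =>
      (Nat.even m = true /\ exists k'', x (S j) (fst (unp (Nat.div2 l))) k'' = true /\
                                       a j x k'' = a j x (fst (unp (Nat.div2 m)))) \/
      (exists p, rank (S j) x (fst (unp (Nat.div2 l))) (snd (unp (Nat.div2 l))) = p /\ m = tau j p)).
    + apply borel_or. apply borel_and. apply borel_const.
      apply borel_ex; intro; apply borel_and. apply borel_cyl. apply borel_aeq.
      apply borel_ex; intro; apply borel_and. apply borel_rank. apply borel_const.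
    + intro x. rewrite Bool.orb_true_iff, Bool.andb_true_iff, dec_true, Nat.eqb_eq.
      split; intros [H|H]; first [left; exact H | right; destruct H as [p [<- ->]]; reflexivity | right; eauto].
Qed.

Lemma borel_preimage n (B : T -> Prop) : borel B -> borel (fun x => B (psi n x)).
Proof.
  induction 1.
  - apply borel_psi.
  - apply (borel_compl _ IHborel).
  - apply (borel_union (fun j x => A j (psi n x))); auto.
Qed.

Lemma borel_Xn n : borel (Xn n).
Proof.
  unfold Xn. apply borel_and.
  - destruct n as [m|]; simpl; [|apply borel_True].
    apply borel_all; intro i; apply borel_all; intro k; apply borel_all; intro l.
    apply borel_imp; [apply borel_const|apply borel_bit].
  - apply borel_all; intro i. apply borel_imp; [apply borel_const|].
    apply borel_imp; [apply borel_const|].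
    apply borel_and; [|apply borel_and].
    + apply borel_all; intro; apply borel_ex; intro; apply borel_cyl.
    + apply borel_all; intro; apply borel_ex; intro; apply borel_cyl.
    + apply borel_all; intro; apply borel_all; intro; apply borel_all; intro.
      apply borel_imp; [apply borel_rowfun_eq|apply borel_biteq].
Qed.

Lemma even_2 c : Nat.even (2 * c) = true.
Proof. rewrite Nat.even_mul; auto. Qed.
Lemma even_2p1 c : Nat.even (2 * c + 1) = false.
Proof. rewrite Nat.even_add, Nat.even_mul; auto. Qed.
Lemma div2_2 c : Nat.div2 (2 * c) = c.
Proof. apply Nat.div2_double. Qed.
Lemma div2_2p1 c : Nat.div2 (2 * c + 1) = c.
Proof. rewrite Nat.add_1_r. apply Nat.div2_succ_double. Qed.

Lemma parity_cases l : (Nat.even l = true /\ l = 2 * Nat.div2 l) \/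
                       (Nat.even l = false /\ l = 2 * Nat.div2 l + 1).
Proof.
  pose proof (Nat.div2_odd l) as H. rewrite <- Nat.negb_even in H.
  destruct (Nat.even l); simpl in H; [left|right]; split; auto; lia.
Qed.

Lemma tau_odd j r : Nat.even (tau j r) = false.
Proof. destruct j; simpl tau; apply even_2p1. Qed.

Lemma tau_inj j r r' : tau j r = tau j r' -> r = r'.
Proof. induction j; simpl; intro; [lia|]. apply IHj; lia. Qed.

Lemma eqb_refl' m : Nat.eqb m m = true.
Proof. apply Nat.eqb_refl. Qed.

Lemma lt_idx_S n j : lt_idx n (S j) -> lt_idx n j.
Proof. destruct n; simpl; auto; lia. Qed.

Lemma lt_idx_le n i j : i <= j -> lt_idx n j -> lt_idx n i.
Proof. destruct n; simpl; auto; lia. Qed.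

Lemma row0_gen n x k s : lt_idx n 0 -> psi n x 0 (2 * pr k s) = Gam0 (x 0 k) (rank 0 x k s).
Proof.
  intro H. apply functional_extensionality; intro m. unfold psi.
  rewrite (proj2 (ltb_spec n 0) H), even_2, div2_2, unp_pr. reflexivity.
Qed.

Lemma row0_aux n x q : lt_idx n 0 -> psi n x 0 (2 * q + 1) = aux q.
Proof.
  intro H. apply functional_extensionality; intro m. unfold psi.
  rewrite (proj2 (ltb_spec n 0) H), even_2p1, div2_2p1. reflexivity.
Qed.

Lemma rowS_odd n x j q m : lt_idx n (S j) -> psi n x (S j) (2 * q + 1) m = Nat.eqb m q.
Proof.
  intro H. unfold psi. rewrite (proj2 (ltb_spec n (S j)) H), even_2p1, div2_2p1. reflexivity.
Qed.

Lemma rowS_even n x j k s m : lt_idx n (S j) -> psi n x (S j) (2 * pr k s) m =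
  ((Nat.even m && dec (exists k'', x (S j) k k'' = true /\ a j x k'' = a j x (fst (unp (Nat.div2 m)))))
   || Nat.eqb m (tau j (rank (S j) x k s)))%bool.
Proof.
  intro H. unfold psi. rewrite (proj2 (ltb_spec n (S j)) H), even_2, div2_2, unp_pr. reflexivity.
Qed.

Lemma psi_out n x i l m : ~ lt_idx n i -> psi n x i l m = false.
Proof.
  intro H. unfold psi. destruct (ltb n i) eqn:E; auto. apply ltb_spec in E; contradiction.
Qed.

Fixpoint Tg (j : nat) : nat -> lvl j :=
  match j as j0 return nat -> lvl j0 with
  | 0 => aux
  | S j' => fun r s => s = Tg j' r
  end.

Fixpoint G (j : nat) : lvl j -> nat -> lvl j :=
  match j as j0 return lvl j0 -> nat -> lvl j0 with
  | 0 => fun v r => Gam0 v r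
  | S j' => fun b r s => (exists c t, b c /\ s = G j' c t) \/ s = Tg j' r
  end.

Fixpoint NE (j : nat) : lvl j -> Prop :=
  match j as j0 return lvl j0 -> Prop with
  | 0 => fun _ => True
  | S j' => fun b => (exists c, b c) /\ forall c, b c -> NE j' c
  end.

Lemma aS_unfold j y l : a (S j) y l = fun s => exists k, y (S j) l k = true /\ s = a j y k.
Proof. reflexivity. Qed.

Lemma GS_unfold j b r : G (S j) b r = fun s => (exists c t, b c /\ s = G j c t) \/ s = Tg j r.
Proof. reflexivity. Qed.

Lemma TgS_unfold j r : Tg (S j) r = fun s => s = Tg j r.
Proof. reflexivity. Qed.

Lemma setext {A : Type} (P Q : A -> Prop) : (forall s, P s <-> Q s) -> P = Q.
Proof. intro H; apply functional_extensionality; intro; apply propositional_extensionality; auto. Qed.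

Lemma a_tau n x j r : lt_idx n j -> a j (psi n x) (tau j r) = Tg j r.
Proof.
  revert r; induction j; intros r H.
  - simpl. apply row0_aux; auto.
  - change (tau (S j) r) with (2 * tau j r + 1).
    rewrite aS_unfold. apply setext; intro s. rewrite TgS_unfold. rewrite <- (IHj r (lt_idx_S _ _ H)).
    split.
    + intros [k [Hk ->]]. rewrite rowS_odd in Hk; auto. apply Nat.eqb_eq in Hk; subst; auto.
    + intros ->. exists (tau j r). rewrite rowS_odd; auto. split; auto. apply Nat.eqb_refl.
Qed.

Lemma a_sig n x j q : lt_idx n (S j) -> a (S j) (psi n x) (2 * q + 1) = fun s => s = a j (psi n x) q.
Proof.
  intro H. rewrite aS_unfold. apply setext; intro s. split.
  - intros [k [Hk ->]]. rewrite rowS_odd in Hk; auto. apply Nat.eqb_eq in Hk; subst; auto.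
  - intros ->. exists q. rewrite rowS_odd; auto. split; auto. apply Nat.eqb_refl.
Qed.

Lemma a_gen n x j : lt_idx n j -> forall k s, a j (psi n x) (2 * pr k s) = G j (a j x k) (rank j x k s).
Proof.
  induction j; intros H k s.
  - simpl. apply row0_gen; auto.
  - specialize (IHj (lt_idx_S _ _ H)).
    rewrite aS_unfold. apply setext; intro u. rewrite GS_unfold. split.
    + intros [l [Hl ->]]. rewrite rowS_even in Hl; auto.
      apply Bool.orb_true_iff in Hl. destruct Hl as [Hl|Hl].
      * apply Bool.andb_true_iff in Hl. destruct Hl as [He Hd]. apply (proj1 (dec_true _)) in Hd.
        destruct Hd as [k'' [Hk'' Ha]].
        destruct (parity_cases l) as [[_ Hl]|[Ho _]]; [|congruence].
        rewrite Hl. rewrite <- (pr_unp (Nat.div2 l)). rewrite IHj.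
        left. exists (a j x (fst (unp (Nat.div2 l)))), (rank j x (fst (unp (Nat.div2 l))) (snd (unp (Nat.div2 l)))).
        split; auto. rewrite aS_unfold. exists k''. auto.
      * apply Nat.eqb_eq in Hl. subst l. right. apply a_tau. apply (lt_idx_S _ _ H).
    + intros [[c [t [[k'' [Hk'' ->]] ->]]] | ->].
      * destruct (rank_surj j x k'' t) as [k' [s' [Ha Hr]]].
        exists (2 * pr k' s'). rewrite IHj, Ha, <- Hr. split; auto.
        rewrite rowS_even; auto. apply Bool.orb_true_iff; left.
        apply Bool.andb_true_iff; split; [apply even_2|]. apply dec_true.
        rewrite div2_2, unp_pr. simpl fst. exists k''. auto.
      * exists (tau j (rank (S j) x k s)). rewrite a_tau by apply (lt_idx_S _ _ H). split; auto.
        rewrite rowS_even; auto. apply Bool.orb_true_iff; right. apply Nat.eqb_refl.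
Qed.

Lemma Gam0_bit v r p : Gam0 v r (S (2 * p)) = v p.
Proof. unfold Gam0. rewrite even_2, div2_2. auto. Qed.

Lemma Gam0_inj v r v' r' : Gam0 v r = Gam0 v' r' -> v = v'.
Proof.
  intro H. apply functional_extensionality; intro p.
  rewrite <- (Gam0_bit v r), <- (Gam0_bit v' r'), H. auto.
Qed.

Lemma Gam0_aux v r q : Gam0 v r <> aux q.
Proof. intro H. assert (Gam0 v r 0 = aux q 0) by (rewrite H; auto). discriminate. Qed.

Lemma G_neq_T j : forall b r r', NE j b -> G j b r <> Tg j r'.
Proof.
  induction j; intros b r r' Hb H.
  - apply (Gam0_aux _ _ _ H).
  - destruct Hb as [[c Hc] Hall].
    assert (Hm : G (S j) b r (G j c 0)) by (rewrite GS_unfold; left; eauto).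
    rewrite H, TgS_unfold in Hm. apply (IHj c 0 r' (Hall c Hc) Hm).
Qed.

Lemma G_neq_sing j b r o : NE (S j) b -> G (S j) b r <> (fun u => u = o).
Proof.
  intros Hb H. destruct Hb as [[c Hc] Hall].
  assert (H1 : G (S j) b r (G j c 0)) by (rewrite GS_unfold; left; eauto).
  assert (H2 : G (S j) b r (Tg j r)) by (rewrite GS_unfold; right; auto).
  rewrite H in H1, H2. apply (G_neq_T j c 0 r (Hall c Hc)). congruence.
Qed.

Lemma G_inj j : forall b b' r r', NE j b -> NE j b' -> G j b r = G j b' r' -> b = b'.
Proof.
  induction j; intros b b' r r' Hb Hb' H.
  - apply (Gam0_inj _ _ _ _ H).
  - assert (Hdir : forall b b' r r', NE (S j) b -> NE (S j) b' -> G (S j) b r = G (S j) b' r' ->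
                   forall c, b c -> b' c).
    { clear b b' r r' Hb Hb' H. intros b b' r r' Hb Hb' H c Hc.
      assert (Hm : G (S j) b r (G j c 0)) by (rewrite GS_unfold; left; eauto).
      rewrite H, GS_unfold in Hm. destruct Hm as [[c' [t [Hc' Heq]]]|Heq].
      - assert (c = c') as -> by (apply (IHj c c' 0 t); [apply (proj2 Hb)|apply (proj2 Hb')|]; auto).
        auto.
      - exfalso; apply (G_neq_T j c 0 r' (proj2 Hb c Hc) Heq). }
    apply setext; intro c; split.
    + apply (Hdir b b' r r'); auto.
    + apply (Hdir b' b r' r); auto.
Qed.

Lemma NE_a n x j : Xn n x -> lt_idx n j -> forall k, NE j (a j x k).
Proof.
  intros [_ HX]. induction j; intros Hj k; simpl; auto.
  destruct (HX (S j) ltac:(lia) Hj) as [_ [H2 _]]. split.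
  - destruct (H2 k) as [m Hm]. exists (a j x m). exists m; auto.
  - intros c [k' [_ ->]]. apply IHj. apply (lt_idx_S _ _ Hj).
Qed.

Lemma a0_unfold y l : a 0 y l = y 0 l.
Proof. reflexivity. Qed.

Lemma AA_unfold j y : AA j y = fun s => exists k, s = a j y k.
Proof. reflexivity. Qed.

Lemma even_code l : Nat.even l = true -> l = 2 * pr (fst (unp (Nat.div2 l))) (snd (unp (Nat.div2 l))).
Proof. intro H. rewrite pr_unp. destruct (parity_cases l) as [[_ E]|[E _]]; auto; congruence. Qed.

Lemma odd_code l : Nat.even l = false -> l = 2 * Nat.div2 l + 1.
Proof. intro H. destruct (parity_cases l) as [[E _]|[_ E]]; auto; congruence. Qed.

Lemma AA0_char n x : lt_idx n 0 ->
  AA 0 (psi n x) = fun u => (exists v r, AA 0 x v /\ u = Gam0 v r) \/ (exists q, u = aux q).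
Proof.
  intro H0. rewrite AA_unfold. apply setext; intro u. split.
  - intros [l ->]. destruct (Nat.even l) eqn:E.
    + rewrite (even_code l E). rewrite (a0_unfold (psi n x)). rewrite row0_gen by auto. left.
      do 2 eexists; split; [|reflexivity]. exists (fst (unp (Nat.div2 l))). reflexivity.
    + rewrite (odd_code l E). rewrite (a0_unfold (psi n x)). rewrite row0_aux by auto. right; eauto.
  - intros [[v [r [[k ->] ->]]] | [q ->]].
    + destruct (rank_surj 0 x k r) as [k' [s' [Ha Hr]]].
      exists (2 * pr k' s'). rewrite (a0_unfold (psi n x)). rewrite row0_gen by auto. rewrite !a0_unfold in Ha. rewrite a0_unfold, Ha, Hr. auto.
    + exists (2 * q + 1). rewrite (a0_unfold (psi n x)). rewrite row0_aux; auto.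
Qed.

Lemma AAS_char n x j : lt_idx n (S j) ->
  AA (S j) (psi n x) = fun u => (exists b r, AA (S j) x b /\ u = G (S j) b r) \/
                                (exists o, AA j (psi n x) o /\ u = (fun v => v = o)).
Proof.
  intro H0. rewrite (AA_unfold (S j)). apply setext; intro u. split.
  - intros [l ->]. destruct (Nat.even l) eqn:E.
    + rewrite (even_code l E). rewrite a_gen by auto. left.
      do 2 eexists; split; [|reflexivity]. exists (fst (unp (Nat.div2 l))). reflexivity.
    + rewrite (odd_code l E). rewrite a_sig by auto. right. eexists; split; [|reflexivity].
      exists (Nat.div2 l). reflexivity.
  - intros [[b [r [[k ->] ->]]] | [o [[q ->] ->]]].
    + destruct (rank_surj (S j) x k r) as [k' [s' [Ha Hr]]].
      exists (2 * pr k' s'). rewrite a_gen by auto. rewrite Ha, Hr. auto.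
    + exists (2 * q + 1). rewrite a_sig; auto.
Qed.

Lemma fwd n x y : forall j, lt_idx n j -> (forall i, i <= j -> AA i x = AA i y) ->
  AA j (psi n x) = AA j (psi n y).
Proof.
  induction j; intros Hj H.
  - rewrite !AA0_char by auto. rewrite (H 0); auto.
  - rewrite !AAS_char by auto. rewrite (H (S j)) by auto.
    rewrite IHj; auto. apply (lt_idx_S _ _ Hj).
Qed.

Lemma bwd_dir n x y j : lt_idx n j -> Xn n x -> Xn n y -> AA j (psi n x) = AA j (psi n y) ->
  forall b, AA j x b -> AA j y b.
Proof.
  intros Hj Hx Hy H b Hb. destruct j as [|j].
  - assert (Hm : AA 0 (psi n x) (Gam0 b 0)) by (rewrite AA0_char by auto; left; eauto).
    rewrite H, AA0_char in Hm by auto.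
    destruct Hm as [[v [r [Hv Heq]]]|[q Heq]].
    + apply Gam0_inj in Heq. subst; auto.
    + exfalso; apply (Gam0_aux _ _ _ Heq).
  - assert (NEb : NE (S j) b) by (destruct Hb as [k ->]; apply (NE_a n); auto).
    assert (Hm : AA (S j) (psi n x) (G (S j) b 0)) by (rewrite AAS_char by auto; left; eauto).
    rewrite H, AAS_char in Hm by auto.
    destruct Hm as [[b' [r [Hb' Heq]]]|[o [_ Heq]]].
    + assert (NEb' : NE (S j) b') by (destruct Hb' as [k ->]; apply (NE_a n); auto).
      rewrite (G_inj _ _ _ _ _ NEb NEb' Heq); auto.
    + exfalso; apply (G_neq_sing _ _ _ _ NEb Heq).
Qed.

Lemma bwd n x y j : lt_idx n j -> Xn n x -> Xn n y -> AA j (psi n x) = AA j (psi n y) ->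
  AA j x = AA j y.
Proof.
  intros. apply setext; intro b; split; [apply (bwd_dir n x y j) | apply (bwd_dir n y x j)]; auto.
Qed.

Lemma AA_union n x j : Xn n x -> lt_idx n (S j) ->
  AA j x = fun o => exists b, AA (S j) x b /\ b o.
Proof.
  intros [_ HX] Hj. destruct (HX (S j) ltac:(lia) Hj) as [H1 _].
  apply setext; intro o. split.
  - intros [k ->]. destruct (H1 k) as [l Hl]. exists (a (S j) x l). split; [exists l; auto|].
    exists k; auto.
  - intros [b [[l ->] [k [_ ->]]]]. exists k; auto.
Qed.

Lemma down_all n x y : Xn n x -> Xn n y -> forall J, lt_idx n J -> AA J x = AA J y ->
  forall i, i <= J -> AA i x = AA i y.
Proof.
  intros Hx Hy J. induction J; intros HJ H i Hi.
  - assert (i = 0) by lia; subst; auto.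
  - destruct (Nat.eq_dec i (S J)) as [->|Hne]; auto.
    apply IHJ; [apply (lt_idx_S _ _ HJ)| |lia].
    rewrite (AA_union n x J), (AA_union n y J), H; auto.
Qed.

Lemma inj0 n x l1 l2 : lt_idx n 0 -> psi n x 0 l1 = psi n x 0 l2 -> l1 = l2.
Proof.
  intros H0 H.
  destruct (Nat.even l1) eqn:E1; destruct (Nat.even l2) eqn:E2.
  - rewrite (even_code l1 E1), (even_code l2 E2) in *.
    rewrite !row0_gen in H by auto.
    assert (Hv := Gam0_inj _ _ _ _ H).
    set (k1 := fst (unp (Nat.div2 l1))) in *. set (s1 := snd (unp (Nat.div2 l1))) in *.
    set (k2 := fst (unp (Nat.div2 l2))) in *. set (s2 := snd (unp (Nat.div2 l2))) in *.
    assert (Hr : rank 0 x k1 s1 = rank 0 x k2 s2).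
    { assert (Gam0 (x 0 k1) (rank 0 x k1 s1) (S (2 * rank 0 x k1 s1 + 1)) =
              Gam0 (x 0 k2) (rank 0 x k2 s2) (S (2 * rank 0 x k1 s1 + 1))) by (rewrite H; auto).
      unfold Gam0 in H1. rewrite even_2p1, div2_2p1, Nat.eqb_refl in H1.
      symmetry in H1; apply Nat.eqb_eq in H1; auto. }
    destruct (rank_inj 0 x k1 s1 k2 s2 Hv Hr) as [-> ->]. auto.
  - rewrite (even_code l1 E1), (odd_code l2 E2) in H.
    rewrite row0_gen, row0_aux in H by auto. exfalso; apply (Gam0_aux _ _ _ H).
  - rewrite (odd_code l1 E1), (even_code l2 E2) in H.
    rewrite row0_gen, row0_aux in H by auto. exfalso; apply (Gam0_aux _ _ _ (eq_sym H)).
  - rewrite (odd_code l1 E1), (odd_code l2 E2) in *.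
    rewrite !row0_aux in H by auto.
    assert (aux (Nat.div2 l1) (S (Nat.div2 l1)) = aux (Nat.div2 l2) (S (Nat.div2 l1))) by (rewrite H; auto).
    simpl in H1. rewrite Nat.eqb_refl in H1. symmetry in H1; apply Nat.eqb_eq in H1. congruence.
Qed.

Lemma gen_even_mem n x j k s k'' : lt_idx n (S j) -> x (S j) k k'' = true ->
  psi n x (S j) (2 * pr k s) (2 * pr k'' 0) = true.
Proof.
  intros Hj Hk. rewrite rowS_even by auto. apply Bool.orb_true_iff; left.
  apply Bool.andb_true_iff; split; [apply even_2|]. apply dec_true.
  rewrite div2_2, unp_pr. simpl fst. eauto.
Qed.

Lemma gen_tau_mem n x j k s : lt_idx n (S j) ->
  psi n x (S j) (2 * pr k s) (tau j (rank (S j) x k s)) = true.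
Proof.
  intros Hj. rewrite rowS_even by auto. apply Bool.orb_true_iff; right. apply Nat.eqb_refl.
Qed.

Lemma gen_odd_only n x j k s m : lt_idx n (S j) -> Nat.even m = false ->
  psi n x (S j) (2 * pr k s) m = true -> m = tau j (rank (S j) x k s).
Proof.
  intros Hj Hm H. rewrite rowS_even in H by auto. rewrite Hm in H. simpl in H.
  apply Nat.eqb_eq; auto.
Qed.

Lemma gen_even_only n x j k s k' s' : lt_idx n (S j) ->
  psi n x (S j) (2 * pr k s) (2 * pr k' s') = true ->
  exists k'', x (S j) k k'' = true /\ a j x k'' = a j x k'.
Proof.
  intros Hj H. rewrite rowS_even in H by auto. apply Bool.orb_true_iff in H.
  destruct H as [H|H].
  - apply Bool.andb_true_iff in H. destruct H as [_ H]. apply (proj1 (dec_true _)) in H.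
    rewrite div2_2, unp_pr in H. simpl fst in H. auto.
  - apply Nat.eqb_eq in H. exfalso. pose proof (tau_odd j (rank (S j) x k s)).
    rewrite <- H, even_2 in H0. discriminate.
Qed.

Lemma gen_has_even n x j k s : Xn n x -> lt_idx n (S j) ->
  exists m, Nat.even m = true /\ psi n x (S j) (2 * pr k s) m = true.
Proof.
  intros [_ HX] Hj. destruct (HX (S j) ltac:(lia) Hj) as [_ [H2 _]].
  destruct (H2 k) as [k'' Hk]. exists (2 * pr k'' 0). split; [apply even_2|].
  apply gen_even_mem; auto.
Qed.

Lemma injS n x j l1 l2 : Xn n x -> lt_idx n (S j) -> psi n x (S j) l1 = psi n x (S j) l2 -> l1 = l2.
Proof.
  intros HX Hj H.
  assert (Hodd : forall q l, Nat.even l = true -> psi n x (S j) (2 * q + 1) <> psi n x (S j) l).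
  { intros q l El Heq. rewrite (even_code l El) in Heq.
    destruct (gen_has_even n x j (fst (unp (Nat.div2 l))) (snd (unp (Nat.div2 l))) HX Hj) as [m [Em Hm]].
    pose proof (gen_tau_mem n x j (fst (unp (Nat.div2 l))) (snd (unp (Nat.div2 l))) Hj) as Ht.
    rewrite <- Heq, rowS_odd in Hm, Ht by auto.
    apply Nat.eqb_eq in Hm; apply Nat.eqb_eq in Ht. subst. rewrite tau_odd in Em; discriminate. }
  destruct (Nat.even l1) eqn:E1; destruct (Nat.even l2) eqn:E2.
  - rewrite (even_code l1 E1), (even_code l2 E2) in *.
    set (k1 := fst (unp (Nat.div2 l1))) in *. set (s1 := snd (unp (Nat.div2 l1))) in *.
    set (k2 := fst (unp (Nat.div2 l2))) in *. set (s2 := snd (unp (Nat.div2 l2))) in *.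
    assert (Hr : rank (S j) x k1 s1 = rank (S j) x k2 s2).
    { pose proof (gen_tau_mem n x j k1 s1 Hj) as Ht. rewrite H in Ht.
      apply gen_odd_only in Ht; auto; [|apply tau_odd]. apply tau_inj in Ht; auto. }
    assert (Ha : a (S j) x k1 = a (S j) x k2).
    { apply aS_eq. split; intros k Hk.
      - pose proof (gen_even_mem n x j k1 s1 k Hj Hk) as Hm. rewrite H in Hm.
        apply gen_even_only in Hm; auto. destruct Hm as [k' [? ?]]; eauto.
      - pose proof (gen_even_mem n x j k2 s2 k Hj Hk) as Hm. rewrite <- H in Hm.
        apply gen_even_only in Hm; auto. destruct Hm as [k' [? ?]]; eauto. }
    destruct (rank_inj _ _ _ _ _ _ Ha Hr) as [-> ->]; auto.
  - rewrite (odd_code l2 E2) in H. exfalso; apply (Hodd _ _ E1 (eq_sym H)).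
  - rewrite (odd_code l1 E1) in H. exfalso; apply (Hodd _ _ E2 H).
  - rewrite (odd_code l1 E1), (odd_code l2 E2) in *.
    assert (psi n x (S j) (2 * Nat.div2 l1 + 1) (Nat.div2 l1) = psi n x (S j) (2 * Nat.div2 l2 + 1) (Nat.div2 l1))
      by (rewrite H; auto).
    rewrite !rowS_odd in H0 by auto. rewrite Nat.eqb_refl in H0.
    symmetry in H0; apply Nat.eqb_eq in H0. congruence.
Qed.

Lemma inj_all n x j l1 l2 : Xn n x -> lt_idx n j -> psi n x j l1 = psi n x j l2 -> l1 = l2.
Proof. destruct j; intros; [apply (inj0 n x)|apply (injS n x j)]; auto. Qed.

Lemma Xn_psi n x : Xn n x -> Xn n (psi n x).
Proof.
  intro HX. split.
  - destruct n as [m|]; simpl; auto. intros i k l Hi. apply psi_out. simpl; lia.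
  - intros i Hi Hlt. destruct i as [|j]; [lia|].
    replace (S j - 1) with j by lia.
    split; [|split].
    + intro m. exists (2 * m + 1). rewrite rowS_odd by auto. apply Nat.eqb_refl.
    + intro k. destruct (Nat.even k) eqn:E.
      * rewrite (even_code k E). eexists; apply gen_tau_mem; auto.
      * rewrite (odd_code k E). exists (Nat.div2 k). rewrite rowS_odd by auto. apply Nat.eqb_refl.
    + intros k l1 l2 Hl. apply (inj_all n x j) in Hl; auto. subst; auto.
      apply (lt_idx_S _ _ Hlt).
Qed.

Theorem lemma5p2 (n : option nat) (hn : forall m, n = Some m -> 1 <= m) :
  exists psi : T -> T,
    borel_reduction n psi /\
    (forall x, Xn n x ->
       (forall i, lt_idx n i -> injective_seq (psi x i)) /\
       (forall i, 0 < i -> lt_idx n i -> separated (psi x i))).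
Proof.
  exists (psi n). split; [split; [|split]|].
  - apply Xn_psi.
  - intros B HB. apply borel_and; [apply borel_Xn|apply borel_preimage; auto].
  - intros x y Hx Hy. destruct n as [m|].
    + assert (Hm := hn m eq_refl). assert (Hl : lt_idx (Some m) (m - 1)) by (simpl; lia).
      simpl. split.
      * intro H. apply fwd; auto. apply (down_all _ x y Hx Hy (m - 1)); auto.
      * intro H. apply (bwd (Some m)); auto.
    + simpl. split.
      * intros H j. apply fwd; simpl; auto.
      * intros H j. apply (bwd None); simpl; auto.
  - intros x Hx. split.
    + intros i Hi k1 k2 Hne Heq. apply Hne. apply (inj_all n x i); auto.
    + intros i Hi Hlt p q Hpq. destruct i as [|j]; [lia|].
      exists (2 * p + 1). rewrite !rowS_odd by auto. rewrite Nat.eqb_refl.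
      intro H. symmetry in H. apply Nat.eqb_eq in H. auto.
Qed.
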